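(* Consider the system $$\dot x = \vartheta,\qquad \dot\vartheta = -\lambda\vartheta - xu + x - x^3,\qquad \dot u = -\alpha u - \beta x\vartheta,$$ with parameters $\alpha>0$, $\lambda\ge 0$, $\beta>0$ satisfying $$\alpha\big(\sqrt{\lambda^2+4}+\lambda\big) > 2(\beta-2).$$ Let $L>0$ satisfy $L>\frac{\sqrt{\lambda^2+4}-\lambda}{2}$ and $\frac{\beta L}{\alpha+2L}<1$, set $K=\frac{\beta L}{\alpha+2L}$ and $M=1-K$, let $\vartheta_0>0$ be arbitrary, and let $x_0$ be the positive root of the equation $$\vartheta_0^2 + x^2 - \frac{M}{2}x^4 = 0.$$ Suppose that $$\lambda^2 > 4\Big[\Big(1+\frac{\beta}{2}\Big)x_0^2 - 1\Big].$$ Let $(x^+(t),\vartheta^+(t),u^+(t))$ be the positive outgoing separatrix of the zero saddle, i.e. the nontrivial solution with $\lim_{t\to-\infty}(x^+,\vartheta^+,u^+)(t)=(0,0,0)$ and $x^+(t)>0$ for all sufficiently negative $t$. Then $x^+(t)>0$ for all $t\in(-\infty,+\infty)$.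
   Context: The origin $(0,0,0)$ is a saddle equilibrium of the system with a one-dimensional unstable manifold; its positive separatrix is the branch of the unstable manifold along which $x>0$ as $t\to-\infty$. *)

(* Defs.v *)
From Stdlib Require Import Reals.
From Coquelicot Require Import Coquelicot.
Open Scope R_scope.

Definition is_solution (alpha lam beta : R) (x th u : R -> R) : Prop :=
  forall t : R,
    is_derive x t (th t) /\
    is_derive th t (- lam * th t - x t * u t + x t - (x t) ^ 3) /\
    is_derive u t (- alpha * u t - beta * x t * th t).

Definition tends_to_origin_at_minus_infty (x th u : R -> R) : Prop :=
  is_lim x m_infty 0 /\ is_lim th m_infty 0 /\ is_lim u m_infty 0.

Definition positive_separatrix (alpha lam beta : R) (x th u : R -> R) : Prop :=
  is_solution alpha lam beta x th u /\
  tends_to_origin_at_minus_infty x th u /\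
  (exists t : R, x t <> 0 \/ th t <> 0 \/ u t <> 0) /\
  (exists t1 : R, forall t : R, t <= t1 -> x t > 0).

(* Main.v *)
Require Import Defs.
From Stdlib Require Import Reals Lra Psatz Classical.
From Coquelicot Require Import Coquelicot.
Open Scope R_scope.

Lemma cont_ed (f : R -> R) c : continuous f c ->
  forall eps, 0 < eps -> exists d, 0 < d /\ forall t, Rabs (t - c) < d -> Rabs (f t - f c) < eps.
Proof.
  intros H eps He. apply continuity_pt_filterlim in H.
  destruct (H eps He) as [d [Hd Hd2]]. exists d; split; auto.
  intros t Ht. destruct (Req_dec t c) as [->|Hne].
  - rewrite Rminus_diag, Rabs_R0; auto.
  - apply (Hd2 t). split; [unfold D_x, no_cond; auto|exact Ht].
Qed.

Lemma lim_ext (f : R -> R) : is_lim f m_infty 0 ->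
  forall eps, 0 < eps -> exists M, forall t, t <= M -> Rabs (f t) < eps.
Proof.
  intros H eps He.
  assert (HL : Rbar_locally (Finite 0) (fun y => Rabs y < eps)).
  { exists (mkposreal eps He). intros y Hy. simpl in Hy.
    unfold ball in Hy; simpl in Hy; unfold AbsRing_ball, abs, minus, plus, opp in Hy; simpl in Hy.
    rewrite Ropp_0, Rplus_0_r in Hy. exact Hy. }
  destruct (H _ HL) as [M HM]. exists (M - 1). intros t Ht. apply HM. lra.
Qed.

Lemma mono_le (g dg : R -> R) a b : a <= b ->
  (forall t, a <= t <= b -> is_derive g t (dg t)) ->
  (forall t, a <= t <= b -> 0 <= dg t) -> g a <= g b.
Proof.
  intros Hab Hd Hp. destruct (Req_dec a b) as [->|Hne]; [lra|].
  destruct (MVT_cor2 g dg a b) as [c [Hc1 Hc2]]; [lra| |].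
  - intros c Hc. apply is_derive_Reals. apply Hd; auto.
  - assert (0 <= dg c) by (apply Hp; lra). nra.
Qed.

Lemma LZ (f : R -> R) a b : a <= b -> (forall t, a <= t <= b -> continuous f t) ->
  f a <= 0 -> 0 <= f b ->
  exists c, a <= c <= b /\ f c = 0 /\ forall t, c < t <= b -> 0 < f t.
Proof.
  intros Hab Hc Ha Hb.
  set (E := fun t => a <= t <= b /\ f t <= 0).
  destruct (completeness E) as [c [Hub Hl]].
  - exists b. intros t [Ht _]. lra.
  - exists a. split; [lra|auto].
  assert (Hac : a <= c) by (apply Hub; split; [lra|auto]).
  assert (Hcb : c <= b) by (apply Hl; intros t [Ht _]; lra).
  assert (Hgt : forall t, c < t <= b -> 0 < f t).
  { intros t Ht. destruct (Rlt_or_le 0 (f t)) as [H|H]; auto.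
    assert (t <= c) by (apply Hub; split; [lra|auto]). lra. }
  exists c. split; [lra|split; auto].
  assert (Hle : f c <= 0).
  { destruct (Rle_or_lt (f c) 0) as [H|H]; auto.
    destruct (cont_ed f c (Hc c ltac:(lra)) (f c) H) as [d [Hd Hd2]].
    assert (Hex : exists e, E e /\ c - d < e).
    { apply NNPP; intro Hn.
      assert (c <= c - d); [|lra].
      apply Hl. intros e He. destruct (Rle_or_lt e (c - d)) as [H1|H1]; auto.
      exfalso; apply Hn; exists e; auto. }
    destruct Hex as [e [[He1 He2] He3]].
    assert (e <= c) by (apply Hub; split; auto).
    assert (Rabs (e - c) < d) by (rewrite Rabs_left1; lra).
    specialize (Hd2 e H1). rewrite Rabs_lt_between in Hd2. lra. }
  destruct (Req_dec c b) as [->|Hne]; [lra|].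
  destruct (Rle_or_lt 0 (f c)) as [H|H]; [lra|].
  destruct (cont_ed f c (Hc c ltac:(lra)) (- f c) ltac:(lra)) as [d [Hd Hd2]].
  set (t := Rmin b (c + d/2)).
  assert (c < t <= b) by (unfold t; apply Rmin_case_strong; intros; lra).
  assert (Rabs (t - c) < d) by (rewrite Rabs_right; unfold t in *; [apply Rmin_case_strong; intros; lra|lra]).
  specialize (Hd2 t H1). specialize (Hgt t H0). rewrite Rabs_lt_between in Hd2. lra.
Qed.

Lemma FZ (f : R -> R) a b : a <= b -> (forall t, a <= t <= b -> continuous f t) ->
  f a <= 0 -> 0 <= f b ->
  exists c, a <= c <= b /\ f c = 0 /\ forall t, a <= t < c -> f t < 0.
Proof.
  intros Hab Hc Ha Hb.
  destruct (LZ (fun t => - f (- t)) (-b) (-a)) as [c [Hc1 [Hc2 Hc3]]]; try lra.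
  - intros t Ht. apply continuity_pt_filterlim.
    apply (continuity_pt_opp (fun t => f (- t))).
    apply (continuity_pt_comp Ropp f).
    + apply (continuity_pt_opp id). apply derivable_continuous_pt, derivable_pt_id.
    + apply continuity_pt_filterlim, Hc. lra.
  - rewrite Ropp_involutive; lra.
  - rewrite Ropp_involutive; lra.
  - exists (- c). split; [lra|split].
    + simpl in Hc2. lra.
    + intros t Ht. specialize (Hc3 (- t) ltac:(lra)). simpl in Hc3. rewrite Ropp_involutive in Hc3. lra.
Qed.

Lemma derD (f : R -> R) a c d : is_derive f c d -> a < c ->
  (forall t, a <= t < c -> f t < f c) -> 0 <= d.
Proof.
  intros Hd Hac Hlt. apply is_derive_Reals in Hd.
  destruct (Rle_or_lt 0 d) as [H|H]; auto.
  destruct (Hd (- d) ltac:(lra)) as [del Hdel].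
  pose proof (cond_pos del) as Hdp.
  set (h := - Rmin (del/2) (c - a)).
  assert (Hh1 : h < 0) by (unfold h; apply Rmin_case_strong; intros; lra).
  assert (Hh2 : Rabs h < del) by (rewrite Rabs_left; [unfold h; apply Rmin_case_strong; intros; lra|lra]).
  assert (Hh3 : a <= c + h) by (unfold h; apply Rmin_case_strong; intros; lra).
  specialize (Hdel h ltac:(lra) Hh2). specialize (Hlt (c + h) ltac:(lra)).
  rewrite Rabs_lt_between in Hdel.
  assert (Hq : (f (c + h) - f c) / h > 0).
  { unfold Rdiv. apply Rmult_neg_neg; [lra|apply Rinv_lt_0_compat; lra]. }
  lra.
Qed.

Lemma derE (f : R -> R) c d : is_derive f c d -> d < 0 -> 0 <= f c ->
  exists eta, 0 < eta /\ forall t, c - eta < t < c -> 0 < f t.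
Proof.
  intros Hd Hn Hc. apply is_derive_Reals in Hd.
  destruct (Hd (- d) ltac:(lra)) as [del Hdel].
  pose proof (cond_pos del) as Hdp.
  exists del. split; [lra|].
  intros t Ht. specialize (Hdel (t - c) ltac:(lra)).
  replace (c + (t - c)) with t in Hdel by ring.
  assert (Rabs (t - c) < del) by (rewrite Rabs_left; lra).
  specialize (Hdel H). rewrite Rabs_lt_between in Hdel.
  assert (Hq : (f t - f c) / (t - c) < 0) by lra.
  destruct (Rle_or_lt (f t - f c) 0) as [H1|H1].
  - exfalso. assert (0 <= (f t - f c) / (t - c)); [|lra].
    unfold Rdiv. assert (/ (t - c) < 0) by (apply Rinv_lt_0_compat; lra). nra.
  - lra.
Qed.

Lemma LIMLEM (w : R -> R) a c : 0 < a ->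
  (forall eps, 0 < eps -> exists M, forall t, t <= M -> - eps < w t) ->
  (forall t, t <= c -> exp (a * t) * w t <= exp (a * c) * w c) -> 0 <= w c.
Proof.
  intros Ha Hl Hm. destruct (Rle_or_lt 0 (w c)) as [H|H]; auto.
  pose proof (exp_pos (a*c)).
  assert (He : 0 < - (exp (a * c) * w c)) by nra.
  destruct (Hl _ He) as [M HM].
  set (t := Rmin M (Rmin c 0)).
  assert (t <= M /\ t <= c /\ t <= 0) by (unfold t; repeat apply Rmin_case_strong; intros; lra).
  specialize (HM t ltac:(lra)). specialize (Hm t ltac:(lra)).
  assert (exp (a * t) <= 1) by (rewrite <- exp_0; destruct (Rle_lt_or_eq_dec (a*t) 0) as [Hq|Hq]; [nra|apply Rlt_le, exp_increasing; lra|rewrite Hq; lra]).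
  pose proof (exp_pos (a*t)).
  destruct (Rle_or_lt 0 (w t)); nra.
Qed.

Lemma cont_of (f : R -> R) t : ex_derive f t -> continuous f t.
Proof. intro H. apply (ex_derive_continuous (K:=R_AbsRing) (V:=R_NormedModule)). exact H. Qed.

Ltac dsolve Ex Dx Dth Du :=
  auto_derive; [repeat split; auto |
   try rewrite (is_derive_unique _ _ _ (Dx _));
   try rewrite (is_derive_unique _ _ _ (Dth _));
   try rewrite (is_derive_unique _ _ _ (Du _)) ].

Theorem lemma3 (alpha lam beta L th0 x0 : R) (x th u : R -> R) :
  alpha > 0 -> lam >= 0 -> beta > 0 ->
  alpha * (sqrt (lam ^ 2 + 4) + lam) > 2 * (beta - 2) ->
  L > 0 -> L > (sqrt (lam ^ 2 + 4) - lam) / 2 ->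
  beta * L / (alpha + 2 * L) < 1 ->
  th0 > 0 ->
  x0 > 0 ->
  th0 ^ 2 + x0 ^ 2 - (1 - beta * L / (alpha + 2 * L)) / 2 * x0 ^ 4 = 0 ->
  lam ^ 2 > 4 * ((1 + beta / 2) * x0 ^ 2 - 1) ->
  positive_separatrix alpha lam beta x th u ->
  forall t : R, x t > 0.
Proof.
  intros Ha Hl Hb _ HL HL2 HK Hth0 Hx0 Hx0eq Hlam
    [Hsol [[Hlx [Hlth Hlu]] [_ [t1 Ht1]]]] t.
  set (K := beta * L / (alpha + 2 * L)) in *.
  assert (HKe : K * (alpha + 2 * L) = beta * L) by (unfold K; field; lra).
  assert (HK0 : 0 < K) by (unfold K; apply Rdiv_lt_0_compat; nra).
  assert (HK2 : 2 * K - beta <= 0) by nra.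
  set (M := 1 - K) in *.
  set (del := L ^ 2 + lam * L - 1).
  assert (Hdel : 0 < del).
  { unfold del. pose proof (sqrt_pos (lam ^ 2 + 4)).
    pose proof (sqrt_sqrt (lam ^ 2 + 4) ltac:(nra)). nra. }
  assert (HMx0 : M / 2 * x0 ^ 2 > 1).
  { assert (H1 : th0 ^ 2 = x0 ^ 2 * (M / 2 * x0 ^ 2 - 1)) by lra.
    destruct (Rle_or_lt (M / 2 * x0 ^ 2) 1) as [H|H]; [|lra].
    assert (0 < th0 ^ 2) by nra. assert (0 < x0 ^ 2) by nra. nra. }
  assert (Dx : forall r, is_derive x r (th r)) by (intro r; apply (Hsol r)).
  assert (Dth : forall r, is_derive th r (- lam * th r - x r * u r + x r - (x r) ^ 3)) by (intro r; apply (Hsol r)).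
  assert (Du : forall r, is_derive u r (- alpha * u r - beta * x r * th r)) by (intro r; apply (Hsol r)).
  assert (Ex : forall r, ex_derive x r) by (intro r; exists (th r); apply Dx).
  assert (Eth : forall r, ex_derive th r) by (intro r; exists (- lam * th r - x r * u r + x r - (x r) ^ 3); apply Dth).
  assert (Eu : forall r, ex_derive u r) by (intro r; exists (- alpha * u r - beta * x r * th r); apply Du).
  destruct (Rlt_or_le 0 (x t)) as [Hxt|Hxt]; [lra|exfalso].
  assert (Ht1t : t1 < t) by (destruct (Rle_or_lt t t1) as [H|H]; [specialize (Ht1 t H); lra|lra]).
  destruct (FZ (fun s => - x s) t1 t) as [ts [Hts1 [Hts2 Hts3]]]; try lra.
  { intros s _. apply cont_of. auto_derive. auto. }
  { specialize (Ht1 t1 (Rle_refl _)). lra. }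
  simpl in Hts2, Hts3.
  assert (Hxts : x ts = 0) by lra.
  assert (Ht1ts : t1 < ts) by (destruct (Req_dec t1 ts) as [<-|]; [specialize (Ht1 t1 (Rle_refl _)); lra|lra]).
  assert (Hpos : forall s, s < ts -> 0 < x s).
  { intros s Hs. destruct (Rle_or_lt s t1) as [H|H]; [apply Ht1; auto|]. specialize (Hts3 s ltac:(lra)). lra. }
  assert (Hnn : forall s, s <= ts -> 0 <= x s).
  { intros s Hs. destruct (Req_dec s ts) as [->|H]; [lra|]. apply Rlt_le, Hpos. lra. }
  destruct (lim_ext u Hlu del Hdel) as [Mu HMu].
  destruct (lim_ext x Hlx x0 Hx0) as [Mx HMx].
  set (N := Rmin t1 (Rmin Mu Mx)).
  assert (HN1 : N <= t1 /\ N <= Mu /\ N <= Mx) by (unfold N; repeat apply Rmin_case_strong; intros; lra).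
  assert (HN : forall s, s <= N -> Rabs (u s) < del /\ x s < x0 /\ 0 < x s).
  { intros s Hs. split; [apply HMu; lra|split; [|apply Ht1; lra]].
    specialize (HMx s ltac:(lra)). rewrite Rabs_lt_between in HMx. lra. }
  assert (SB : forall c, c <= ts -> (forall s, s <= c -> 0 <= del + u s + x s ^ 2) ->
     (forall s, s <= c -> th s <= L * x s) /\ 0 <= u c + K * x c ^ 2).
  { intros c Hc HQ.
    assert (Hz : forall s, s <= c -> th s <= L * x s).
    { intros s Hs.
      enough (0 <= L * x s - th s) by lra.
      apply (LIMLEM (fun r => L * x r - th r) (lam + L) s); [lra| |].
      - intros eps He. destruct (lim_ext th Hlth eps He) as [M1 HM1].
        exists (Rmin M1 N). intros r Hr.
        assert (r <= M1 /\ r <= N) by (revert Hr; apply Rmin_case_strong; intros; lra).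
        specialize (HM1 r ltac:(lra)). rewrite Rabs_lt_between in HM1.
        destruct (HN r ltac:(lra)) as [_ [_ H3]]. nra.
      - intros r Hr.
        apply (mono_le (fun r => exp ((lam + L) * r) * (L * x r - th r))
                 (fun r => exp ((lam + L) * r) * (x r * (del + u r + x r ^ 2)))); [lra| |].
        + intros q Hq. dsolve Ex Dx Dth Du. unfold del; ring.
        + intros q Hq. pose proof (exp_pos ((lam + L) * q)).
          specialize (HQ q ltac:(lra)). specialize (Hnn q ltac:(lra)).
          apply Rmult_le_pos; [lra|]. apply Rmult_le_pos; lra. }
    split; auto.
    apply (LIMLEM (fun r => u r + K * x r ^ 2) alpha c); [lra| |].
    - intros eps He. destruct (lim_ext u Hlu eps He) as [M1 HM1].
      exists M1. intros r Hr. specialize (HM1 r Hr). rewrite Rabs_lt_between in HM1.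
      assert (0 <= K * x r ^ 2) by (apply Rmult_le_pos; [lra| apply pow2_ge_0]). lra.
    - intros r Hr.
      apply (mono_le (fun r => exp (alpha * r) * (u r + K * x r ^ 2))
               (fun r => exp (alpha * r) * (alpha * K * x r ^ 2 + (2 * K - beta) * x r * th r))); [lra| |].
      + intros q Hq. dsolve Ex Dx Dth Du. ring.
      + intros q Hq. pose proof (exp_pos (alpha * q)).
        specialize (Hz q ltac:(lra)). specialize (Hnn q ltac:(lra)).
        apply Rmult_le_pos; [lra|].
        assert (x q * th q <= L * x q ^ 2) by nra.
        assert ((2 * K - beta) * (x q * th q) >= (2 * K - beta) * (L * x q ^ 2)) by nra.
        assert (alpha * K + (2 * K - beta) * L = 0) by nra.
        nra. }
  assert (HQ : forall s, s <= ts -> 0 < del + u s + x s ^ 2).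
  { intros T' HT'. apply NNPP. intro Hn. apply Rnot_lt_le in Hn.
    assert (HNT : N < T').
    { destruct (Rle_or_lt T' N) as [H|H]; auto. destruct (HN T' H) as [H1 _].
      rewrite Rabs_lt_between in H1. pose proof (pow2_ge_0 (x T')). lra. }
    destruct (FZ (fun s => - (del + u s + x s ^ 2)) N T') as [c [Hc1 [Hc2 Hc3]]]; try lra.
    { intros s _. apply cont_of. auto_derive. auto. }
    { destruct (HN N (Rle_refl _)) as [H1 _]. rewrite Rabs_lt_between in H1.
      pose proof (pow2_ge_0 (x N)). lra. }
    simpl in Hc2, Hc3.
    destruct (SB c ltac:(lra)) as [_ Hw].
    { intros s Hs. destruct (Rle_or_lt s N) as [H|H].
      - destruct (HN s H) as [H1 _]. rewrite Rabs_lt_between in H1.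
        pose proof (pow2_ge_0 (x s)). lra.
      - destruct (Req_dec s c) as [->|H2]; [lra|]. specialize (Hc3 s ltac:(lra)). lra. }
    pose proof (pow2_ge_0 (x c)). nra. }
  assert (SBall : forall c, c <= ts -> (forall s, s <= c -> th s <= L * x s) /\ 0 <= u c + K * x c ^ 2).
  { intros c Hc. apply SB; auto. intros s Hs. apply Rlt_le, HQ. lra. }
  set (En := fun r => th r ^ 2 - x r ^ 2 + M / 2 * x r ^ 4).
  assert (Hen : forall a b, a <= b -> b <= ts -> (forall r, a <= r <= b -> 0 <= th r) -> En b <= En a).
  { intros a b Hab Hbts Hth.
    enough (- En a <= - En b) by lra.
    apply (mono_le (fun r => - En r)
             (fun r => 2 * lam * th r ^ 2 + 2 * x r * th r * (u r + K * x r ^ 2))); [lra| |].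
    - intros q Hq. unfold En. dsolve Ex Dx Dth Du. unfold M. field.
    - intros q Hq. specialize (Hth q Hq). destruct (SBall q ltac:(lra)) as [_ Hw].
      specialize (Hnn q ltac:(lra)).
      assert (0 <= x q * th q) by nra.
      assert (0 <= 2 * x q * th q * (u q + K * x q ^ 2)) by nra. nra. }
  assert (HX : forall s, s <= ts -> x s <= x0).
  { intros T' HT'. apply NNPP. intro Hn. apply Rnot_le_lt in Hn.
    assert (HNT : N < T').
    { destruct (Rle_or_lt T' N) as [H|H]; auto. destruct (HN T' H) as [_ [H1 _]]. lra. }
    destruct (FZ (fun s => x s - x0) N T') as [c [Hc1 [Hc2 Hc3]]]; try lra.
    { intros s _. apply cont_of. auto_derive. auto. }
    { destruct (HN N (Rle_refl _)) as [_ [H1 _]]. lra. }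
    simpl in Hc2, Hc3.
    assert (Hxc : x c = x0) by lra.
    assert (HNc : N < c) by (destruct (Req_dec N c) as [<-|]; [destruct (HN N (Rle_refl _)) as [_ [H1 _]]; lra|lra]).
    assert (Hlt : forall s, s < c -> x s < x0).
    { intros s Hs. destruct (Rle_or_lt s N) as [H|H]; [apply HN; auto|]. specialize (Hc3 s ltac:(lra)). lra. }
    assert (Hthc : 0 <= th c).
    { apply (derD x N c (th c) (Dx c) HNc). intros s Hs. rewrite Hxc. apply Hlt. lra. }
    destruct (SBall c ltac:(lra)) as [_ Hwc].
    assert (Hdc : - lam * th c - x c * u c + x c - x c ^ 3 < 0).
    { rewrite Hxc in *. assert (u c >= - K * x0 ^ 2) by lra.
      assert (- x0 * u c <= K * x0 ^ 3) by nra.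
      assert (x0 * (1 - M * x0 ^ 2) < 0) by nra.
      assert (0 <= lam * th c) by nra. unfold M in *. nra. }
    destruct (derE th c _ (Dth c) Hdc Hthc) as [eta [Heta Heta2]].
    set (c' := c - eta / 2).
    assert (Hthc' : 0 < th c') by (apply Heta2; unfold c'; lra).
    assert (HEc : En c >= th0 ^ 2) by (unfold En; rewrite Hxc; pose proof (pow2_ge_0 (th c)); lra).
    assert (Hnear : forall r, c' <= r <= c -> 0 <= th r).
    { intros r Hr. destruct (Req_dec r c) as [->|H]; [lra|]. apply Rlt_le, Heta2. unfold c' in *; lra. }
    destruct (classic (exists s, s <= c' /\ th s < 0)) as [[s [Hs1 Hs2]]|Hno].
    - destruct (LZ th s c') as [s' [Hs'1 [Hs'2 Hs'3]]]; try lra.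
      { intros r _. apply cont_of. apply Eth. }
      assert (HE : En c <= En s').
      { apply Hen; [unfold c' in *; lra|lra|].
        intros r Hr. destruct (Rle_or_lt r c') as [H|H].
        - destruct (Req_dec r s') as [->|H2]; [lra|]. apply Rlt_le, Hs'3. lra.
        - apply Hnear. lra. }
      assert (Hxs' : x s' < x0) by (apply Hlt; unfold c' in *; lra).
      assert (Hxs'0 : 0 <= x s') by (apply Hnn; unfold c' in *; lra).
      unfold En in HE. rewrite Hs'2 in HE.
      assert ((x s' ^ 2 - x0 ^ 2) * (M / 2 * (x s' ^ 2 + x0 ^ 2) - 1) < 0).
      { apply Rmult_neg_pos; [nra|]. pose proof (pow2_ge_0 (x s')). assert (0 < M) by (unfold M; lra). nra. }
      nra.
    - destruct (lim_ext th Hlth th0 Hth0) as [M1 HM1].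
      destruct (lim_ext x Hlx 1 ltac:(lra)) as [M2 HM2].
      set (s := Rmin N (Rmin M1 M2)).
      assert (s <= N /\ s <= M1 /\ s <= M2) by (unfold s; repeat apply Rmin_case_strong; intros; lra).
      assert (HE : En c <= En s).
      { apply Hen; [lra|lra|]. intros r Hr. destruct (Rle_or_lt r c') as [H1|H1].
        - destruct (Rle_or_lt 0 (th r)) as [H2|H2]; auto. exfalso; apply Hno; exists r; auto.
        - apply Hnear; lra. }
      specialize (HM1 s ltac:(lra)). specialize (HM2 s ltac:(lra)).
      rewrite Rabs_lt_between in HM1, HM2.
      assert (th s ^ 2 < th0 ^ 2) by nra.
      assert (x s ^ 2 < 1) by nra.
      assert (0 < M < 1) by (unfold M; lra).
      pose proof (pow2_ge_0 (x s)).
      assert (M / 2 * x s ^ 2 - 1 < 0) by nra.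
      assert (x s ^ 2 * (M / 2 * x s ^ 2 - 1) <= 0) by (apply Rmult_le_0_l; lra).
      assert (x s ^ 2 * (M / 2 * x s ^ 2 - 1) = M / 2 * x s ^ 4 - x s ^ 2) by ring.
      unfold En in HE, HEc. lra. }
  assert (HV : forall c, c <= ts -> u c + beta / 2 * x c ^ 2 <= beta / 2 * x0 ^ 2).
  { intros c Hc.
    enough (0 <= beta / 2 * x0 ^ 2 - u c - beta / 2 * x c ^ 2) by lra.
    apply (LIMLEM (fun r => beta / 2 * x0 ^ 2 - u r - beta / 2 * x r ^ 2) alpha c); [lra| |].
    - intros eps He. destruct (lim_ext u Hlu eps He) as [M1 HM1].
      exists (Rmin M1 N). intros r Hr.
      assert (r <= M1 /\ r <= N) by (revert Hr; apply Rmin_case_strong; intros; lra).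
      specialize (HM1 r ltac:(lra)). rewrite Rabs_lt_between in HM1.
      destruct (HN r ltac:(lra)) as [_ [H2 H3]].
      assert (x r ^ 2 <= x0 ^ 2) by nra. nra.
    - intros r Hr.
      apply (mono_le (fun r => exp (alpha * r) * (beta / 2 * x0 ^ 2 - u r - beta / 2 * x r ^ 2))
               (fun r => exp (alpha * r) * (alpha * beta / 2 * (x0 ^ 2 - x r ^ 2)))); [lra| |].
      + intros q Hq. dsolve Ex Dx Dth Du. field.
      + intros q Hq. pose proof (exp_pos (alpha * q)).
        specialize (HX q ltac:(lra)). specialize (Hnn q ltac:(lra)).
        apply Rmult_le_pos; [lra|].
        assert (x q ^ 2 <= x0 ^ 2) by nra.
        assert (0 < alpha * beta / 2) by nra. nra. }
  assert (Hxi : exists xi, xi <= t1 /\ 0 < th xi).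
  { apply NNPP. intro Hn.
    assert (Hm : forall s, s <= t1 -> x t1 <= x s).
    { intros s Hs.
      enough (- x s <= - x t1) by lra.
      apply (mono_le (fun r => - x r) (fun r => - th r)); [lra| |].
      - intros q Hq. dsolve Ex Dx Dth Du. ring.
      - intros q Hq. destruct (Rle_or_lt (th q) 0) as [H|H]; [lra|].
        exfalso; apply Hn; exists q; split; [lra|auto]. }
    pose proof (Ht1 t1 (Rle_refl _)).
    destruct (lim_ext x Hlx (x t1) ltac:(lra)) as [M1 HM1].
    set (s := Rmin M1 t1).
    assert (s <= M1 /\ s <= t1) by (unfold s; apply Rmin_case_strong; intros; lra).
    specialize (HM1 s ltac:(lra)). specialize (Hm s ltac:(lra)).
    rewrite Rabs_lt_between in HM1. lra. }
  destruct Hxi as [xi [Hxi1 Hxi2]].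
  assert (HP : exp (lam / 2 * xi) * (th xi + lam / 2 * x xi) <= exp (lam / 2 * ts) * (th ts + lam / 2 * x ts)).
  { apply (mono_le (fun r => exp (lam / 2 * r) * (th r + lam / 2 * x r))
             (fun r => exp (lam / 2 * r) * (x r * (lam ^ 2 / 4 - (x r ^ 2 + u r - 1))))); [lra| |].
    - intros q Hq. dsolve Ex Dx Dth Du. field.
    - intros q Hq. pose proof (exp_pos (lam / 2 * q)).
      specialize (HX q ltac:(lra)). specialize (Hnn q ltac:(lra)). specialize (HV q ltac:(lra)).
      apply Rmult_le_pos; [lra|]. apply Rmult_le_pos; [lra|].
      assert (x q ^ 2 <= x0 ^ 2) by nra.
      assert (beta / 2 * x q ^ 2 >= 0) by nra.
      assert (x q ^ 2 + u q <= x0 ^ 2 + beta / 2 * x0 ^ 2) by nra.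
      nra. }
  assert (Hthts : 0 < th ts).
  { pose proof (exp_pos (lam / 2 * xi)). pose proof (exp_pos (lam / 2 * ts)).
    assert (0 <= lam / 2 * x xi) by (pose proof (Ht1 xi Hxi1); nra).
    rewrite Hxts in HP. nra. }
  assert (Hd : 0 <= - th ts).
  { apply (derD (fun r => - x r) t1 ts (- th ts)); [|lra|].
    - auto_derive; [auto|]. rewrite (is_derive_unique _ _ _ (Dx _)). ring.
    - intros s Hs. specialize (Hts3 s Hs). lra. }
  lra.
Qed.
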